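(* Let $m\neq\pm1$ be a square-free integer, $p$ a prime, $k$ a positive integer, $\alpha$ a root of $X^{p^k}-m$, $M=\mathbb{Q}(\alpha)$, $r$ the remainder of $m$ modulo $p^{k+1}$, $s:=v_p(m^p-m)-1$, and for $t\in\mathbb{N}$ let $h^{(r)}_t(X)=\frac{X^{p^k}-r^{p^t}}{X^{p^{k-t}}-r}=\sum_{i=0}^{p^t-1} r^{i}X^{p^k-(i+1)p^{k-t}}\in\mathbb{Z}[X]$. Suppose $s<k$. Then the following $p^k$ elements of $M$ are algebraic integers and are linearly independent over $\mathbb{Q}$: $$\alpha^j\cdot\frac{h^{(r)}_t(\alpha)}{p^t}\quad\text{for } 0\leq t\leq s-1,\ 0\leq j\leq p^{k-t}-p^{k-t-1}-1,$$ together with $$\alpha^j\cdot\frac{h^{(r)}_s(\alpha)}{p^s}\quad\text{for } 0\leq j\leq p^{k-s}-1.$$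
   Context: $v_p$ denotes the $p$-adic valuation on $\mathbb{Q}$. *)

(* Defs.v *)
From mathcomp Require Import all_boot all_order all_algebra all_field.
Set Implicit Arguments. Unset Strict Implicit. Unset Printing Implicit Defensive.
Import Order.TTheory GRing.Theory Num.Theory.
Local Open Scope ring_scope.

Definition squarefree_int (m : int) : Prop :=
  m != 0 /\ forall d : nat, (d * d %| `|m|)%N -> d = 1%N.

Definition vp (p : nat) (z : int) : nat := logn p `|z|%N.

Definition hpoly (p k t : nat) (r : int) : {poly int} :=
  \sum_(i < p ^ t) r ^+ i *: 'X^(p ^ k - i.+1 * p ^ (k - t)).

Definition basis_index (p k s : nat) : seq (nat * nat) :=
  [seq (t, j) | t <- iota 0 s, j <- iota 0 (p ^ (k - t) - p ^ (k - t - 1))]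
  ++ [seq (s, j) | j <- iota 0 (p ^ (k - s))].

Definition basis_elt (p k : nat) (r : int) (alpha : algC) (tj : nat * nat) : algC :=
  alpha ^+ tj.2 * (map_poly intr (hpoly p k tj.1 r)).[alpha] / (p ^ tj.1)%:R.

Definition Q_lin_indep (I : eqType) (idx : seq I) (f : I -> algC) : Prop :=
  uniq idx /\
  forall c : I -> rat, \sum_(i <- idx) ratr (c i) * f i = 0 ->
    forall i, i \in idx -> c i = 0.

(* Main.v *)
Require Import Defs.
From mathcomp Require Import all_boot all_order all_algebra all_field.
From mathcomp Require Import zify ring.
Import Order.TTheory GRing.Theory Num.Theory.
Set Implicit Arguments. Unset Strict Implicit. Unset Printing Implicit Defensive.
Local Open Scope ring_scope.


Lemma sqfree_prime (m : int) : squarefree_int m -> m != 1 -> m != -1 ->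
  exists q, [/\ prime q, (q %| `|m|)%N & ~~ (q * q %| `|m|)%N].
Proof.
move=> [m0 sq] m1 mN1.
have h1 : (1 < `|m|)%N.
  clear sq; move: m0 m1 mN1; case: m => [[|[|n]]|[|n]] //.
have qp := pdiv_prime h1.
exists (pdiv `|m|); split => //; first exact: pdiv_dvd.
apply/negP => /sq q1; by rewrite q1 in qp.
Qed.

Lemma nt_contra (q n : nat) (a m z : int) : prime q -> ~~ (q %| `|a|)%N ->
  ~~ (q * q %| `|m|)%N -> m != 0 -> (0 < n)%N ->
  a ^+ n * m ^+ n.-1 = z * (q ^ n)%:Z -> False.
Proof.
move=> qp qa qqm m0 n0 E.
have a0 : (0 < `|a|)%N by rewrite absz_gt0; apply: contraNneq qa => ->.
have m0' : (0 < `|m|)%N by rewrite absz_gt0.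
move/(congr1 absz): E; rewrite abszM !abszX abszM absz_nat => E.
have : (q ^ n %| `|a| ^ n * `|m| ^ n.-1)%N by rewrite E dvdn_mull.
rewrite pfactor_dvdn // ?muln_gt0 ?expn_gt0 ?a0 ?m0' // lognM ?expn_gt0 ?a0 ?m0' //.
rewrite !lognX logn_coprime ?prime_coprime //.
have : (logn q `|m| <= 1)%N.
  rewrite leqNgt; apply: contra qqm => h; rewrite mulnn pfactor_dvdn //.
move=> L1 L2.
have : (n <= n.-1 * 1)%N.
  apply: (leq_trans L2); rewrite muln0 add0n leq_mul2l L1 orbT //.
lia.
Qed.


Lemma alpha_Aint (m : int) (n : nat) (alpha : algC) : (0 < n)%N ->
  alpha ^+ n = m%:~R -> alpha \in Aint.
Proof.
move=> n0 an.
apply: (@root_monic_Aint ('X^n - (m%:~R)%:P)).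
- by rewrite /root !hornerE an subrr.
- exact: monicXnsubC.
- by rewrite polyOverXnsubC rpred_int.
Qed.

Lemma powers_indep_int (m : int) (n : nat) (alpha : algC) :
  squarefree_int m -> m != 1 -> m != -1 -> (0 < n)%N ->
  alpha ^+ n = m%:~R -> forall P : {poly int}, (size P <= n)%N ->
  (map_poly intr P).[alpha] = 0 -> P = 0.
Proof.
move=> sqm m1 mN1 n0 an P sP eP.
have [q [qp qm qqm]] := sqfree_prime sqm m1 mN1.
have aA := alpha_Aint n0 an.
apply/eqP; apply/negPn/negP => P0.
set Q := zprimitive P.
have sQ : (size Q <= n)%N by rewrite size_zprimitive.
have eQ : (map_poly intr Q).[alpha] = 0.
  move: eP; rewrite {1}(zpolyEprim P) map_polyZ hornerZ => /eqP.
  by rewrite mulf_eq0 intr_eq0 zcontents_eq0 (negbTE P0) /= => /eqP.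
have : [exists i : 'I_(size Q), ~~ (q%:Z %| Q`_i)%Z].
  rewrite -negb_forall; apply/negP => /forallP Hall.
  have : Q \is a polyOver (dvdz q).
    apply/polyOverP => i; case: (ltnP i (size Q)) => [lt|ge].
      exact: (Hall (Ordinal lt)).
    by rewrite nth_default // dvdz0.
  rewrite -dvdz_contents zcontents_primitive P0 /dvdz /=.
  by rewrite unfold_in /= dvdn1 => /eqP q1; rewrite q1 in qp.
case/existsP => i1 ni1.
have exi : exists i, ~~ (q%:Z %| Q`_i)%Z by exists i1.
have [i0' ni0 mini0] : exists2 i, ~~ (q%:Z %| Q`_i)%Z &
    forall j, ~~ (q%:Z %| Q`_j)%Z -> (i <= j)%N.
  case: (ex_minnP exi) => i Hi Hm; by exists i.
have i0n : (i0' < n)%N.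
  rewrite ltnNge; apply: contra ni0 => ge.
  by rewrite nth_default ?dvdz0 // (leq_trans sQ).
set a := fun i => Q`_i.
have E : \sum_(i < n) (a i)%:~R * alpha ^+ (i + (n.-1 - i0')) = 0.
  move: eQ; rewrite (horner_coef_wide _ (n := n)); last by rewrite size_map_inj_poly //; exact: intr_inj.
  move => /(congr1 (fun x => alpha ^+ (n.-1 - i0') * x)).
  rewrite mulr0 mulr_sumr => E0; rewrite -[RHS]E0; apply: eq_bigr => i _.
  by rewrite coef_map /= exprD [RHS]mulrC -mulrA.
set x := (a i0')%:~R * alpha ^+ n.-1 / q%:R.
have q0 : (q%:R : algC) != 0 by rewrite pnatr_eq0 -lt0n prime_gt0.
have xA : x \in Aint.
  have e1 : (i0' + (n.-1 - i0') = n.-1)%N by rewrite subnKC // -ltnS (ltn_predK i0n).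
  rewrite (bigD1 (Ordinal i0n)) // in E; rewrite [nat_of_ord (Ordinal i0n)]/= e1 in E.
  have -> : x = - \sum_(i < n | i != Ordinal i0n) ((a i)%:~R * alpha ^+ (i + (n.-1 - i0')) / q%:R).
    rewrite -mulr_suml -mulNr; congr (_ / _); apply/eqP; rewrite -addr_eq0 //.
    by apply/eqP.
  rewrite rpredN rpred_sum // => i ii0.
  have : i != i0' :> nat by apply: contra ii0 => /eqP h; apply/eqP/val_inj.
  rewrite neq_ltn => /orP [lt|gt].
  - have dq : (q%:Z %| a i)%Z.
      apply/negPn/negP => nd; have := mini0 _ nd; by rewrite leqNgt lt.
    rewrite -(divzK dq) rmorphM /=.
    have -> : (q%:Z)%:~R = (q%:R : algC) by [].
    by rewrite mulrAC mulfK // rpredM ?Aint_int ?rpredX.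
  - have -> : (i + (n.-1 - i0') = n + (i - i0'.+1))%N.
      by move: (gt) (i0n) (ltn_ord i) => h1 h2 h3; clear -h1 h2 h3; lia.
    have dm : (q%:Z %| m)%Z by rewrite /dvdz absz_nat.
    rewrite exprD an -(divzK dm) rmorphM /=.
    have -> : (q%:Z)%:~R = (q%:R : algC) by [].
    by rewrite !mulrA mulrAC mulfK // !rpredM ?Aint_int ?rpredX.
have xn : x ^+ n = ((a i0') ^+ n * m ^+ n.-1)%:~R / ((q ^ n)%:Z)%:~R.
  rewrite /x !exprMn exprVn -exprM mulnC exprM an rmorphM /= !rmorphXn /=.
  by [].
have xnA : x ^+ n \in Num.int.
  apply: Cint_rat_Aint; last exact: rpredX.
  by rewrite xn rpred_div ?rpred_int.
case/intrP: xnA => z Hz.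
have qn0 : ((q ^ n)%:Z)%:~R != 0 :> algC by rewrite intr_eq0 eqz_nat expn_eq0 negb_and -lt0n prime_gt0.
move: Hz; rewrite xn => /(canRL (mulfVK qn0)); rewrite -rmorphM /= => /intr_inj Hz.
have m0 : m != 0 by case: sqm.
apply: (nt_contra qp _ qqm m0 n0 Hz).
exact: ni0.
Qed.


Lemma powers_indep_rat (m : int) (n : nat) (alpha : algC) :
  squarefree_int m -> m != 1 -> m != -1 -> (0 < n)%N ->
  alpha ^+ n = m%:~R -> forall Q : {poly rat}, (size Q <= n)%N ->
  (map_poly ratr Q).[alpha] = 0 -> Q = 0.
Proof.
move=> sqm m1 mN1 n0 an Q.
have [Qz [a a0 ->]] := rat_poly_scale Q.
rewrite size_scale ?invr_eq0 ?intr_eq0 // size_rat_int_poly => sQ.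
rewrite map_polyZ hornerZ => /eqP; rewrite mulf_eq0 fmorph_eq0 invr_eq0 intr_eq0 (negbTE a0) /=.
rewrite -map_poly_comp.
have -> : map_poly (ratr \o intr) Qz = map_poly (intr : int -> algC) Qz.
  by apply: eq_map_poly => b /=; rewrite ratr_int.
move/eqP => E.
by rewrite (powers_indep_int sqm m1 mN1 n0 an sQ E) map_poly0 scaler0.
Qed.

Lemma Aint_rel (x : algC) (P : nat) (b : nat -> int) : (0 < P)%N ->
  x ^+ P = \sum_(i < P) (b i)%:~R * x ^+ (P.-1 - i) -> x \in Aint.
Proof.
move=> P0 E.
pose g := \poly_(i < P) ((b (P.-1 - i)%N)%:~R : algC).
have sg : (size g <= P)%N by apply: size_poly.
apply: (@root_monic_Aint ('X^P - g)).
- rewrite /root hornerD hornerN hornerXn horner_poly E subr_eq0.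
  apply/eqP; rewrite (reindex_inj rev_ord_inj) /=; apply: eq_bigr => i _.
  have h := ltn_ord i; have -> : (P - i.+1 = P.-1 - i)%N by clear -h; lia.
  by have -> : (P.-1 - (P.-1 - i) = i)%N by clear -h; lia.
- rewrite monicE lead_coefDl ?lead_coefXn // size_polyN size_polyXn ltnS //.
- apply/polyOverP => i; rewrite coefB coefXn coef_poly.
  by rewrite rpredB ?rpred_nat //; case: ifP => _; rewrite ?rpred_int ?rpred0.
Qed.


Lemma helper1 (F : comRingType) (R eps h C : F) (a b d Cb : nat) : eps * h = C ->
  R^+a * eps^+b.+1 *+ Cb * (h^+b.+1 * h^+d) = C * ((C^+b * R^+a *+ Cb) * h^+d).
Proof. move=> E. rewrite -E !exprS exprMn. ring. Qed.

Lemma helper2 (F : fieldType) (T h D : F) (i d : nat) : D != 0 ->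
  T * h^+d / D^+(i.+1 + d) = T / D^+(i.+1) * (h / D)^+d.
Proof. move=> D0. rewrite exprD expr_div_n. field. by rewrite !expf_neq0. Qed.

Lemma h_Aint (r c : int) (P D : nat) (beta : algC) :
  (0 < P)%N -> (0 < D)%N -> beta ^+ P = r%:~R ^+ P + c%:~R -> c != 0 ->
  (forall i, (i < P)%N -> ((D ^ i.+1)%:Z %| ('C(P, i.+1))%:Z * c ^+ i)%Z) ->
  (\sum_(i < P) beta ^+ (P.-1 - i) * r%:~R ^+ i) / D%:R \in Aint.
Proof.
move=> P0 D0 E c0 Hdiv.
set h := \sum_(i < P) _.
set R : algC := r%:~R; set C : algC := c%:~R.
have C0 : C != 0 by rewrite intr_eq0.
have D0' : (D%:R : algC) != 0 by rewrite pnatr_eq0 -lt0n.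
set eps := beta - R.
have hE : eps * h = C by rewrite /eps /h -subrXX E [_ + C]addrC addrK.
have bin : C = \sum_(i < P) R ^+ (P - i.+1) * eps ^+ i.+1 *+ 'C(P, i.+1).
  have be : beta = R + eps by rewrite /eps addrC subrK.
  move: E; rewrite {1}be exprDn big_ord_recl /= subn0 expr0 mulr1 bin0 mulr1n => E'.
  by apply: (addrI (R ^+ P)); rewrite -E'.
have hP : h ^+ P = \sum_(i < P) (C ^+ i * R ^+ (P - i.+1) *+ 'C(P, i.+1)) * h ^+ (P.-1 - i).
  apply: (mulfI C0); rewrite mulr_sumr {1}bin mulr_suml; apply: eq_bigr => i _.
  have ei : (i.+1 + (P.-1 - i) = P)%N by move: (ltn_ord i) => hi; clear -hi; lia.
  rewrite [h ^+ P](_ : _ = h ^+ i.+1 * h ^+ (P.-1 - i)); last by rewrite -exprD ei.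
  exact: helper1.
pose b (i : nat) : int := ((('C(P, i.+1))%:Z * c ^+ i) %/ (D ^ i.+1)%:Z)%Z * r ^+ (P - i.+1).
apply: (@Aint_rel _ P b P0).
rewrite expr_div_n hP mulr_suml; apply: eq_bigr => i _.
have ei : (P = i.+1 + (P.-1 - i))%N by move: (ltn_ord i) => hi; clear -hi; lia.
rewrite [in D%:R ^+ P]ei helper2 //; congr (_ * _).
have := divzK (Hdiv i (ltn_ord i)).
rewrite /b; move: (((('C(P, i.+1))%:Z * c ^+ i) %/ (D ^ i.+1)%:Z)%Z) => z Hz.
have Dn0 : ((D ^ i.+1)%:Z)%:~R != 0 :> algC by rewrite intr_eq0 eqz_nat expn_eq0 negb_and -lt0n D0.
have -> : ((z * r ^+ (P - i.+1))%:~R : algC) = ((('C(P, i.+1))%:Z * c ^+ i)%:~R) / ((D ^ i.+1)%:Z)%:~R * R ^+ (P - i.+1).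
  by rewrite -Hz !rmorphM /= mulfK // rmorphXn.
rewrite rmorphM /= rmorphXn /=.
have -> : (((D ^ i.+1)%:Z)%:~R : algC) = D%:R ^+ i.+1 by rewrite -natrX.
rewrite /C /R -mulr_natl.
have -> : (('C(P, i.+1))%:Z)%:~R = ('C(P, i.+1))%:R :> algC by [].
by rewrite mulrA mulrAC.
Qed.


Lemma logn_small (p j : nat) : prime p -> (0 < j)%N -> (logn p j < j)%N.
Proof.
move=> pp j0.
have p1 : (1 < p)%N by apply: prime_gt1.
have h1 : (p ^ logn p j <= j)%N by apply: dvdn_leq => //; apply: pfactor_dvdnn.
have h2 : (j < p ^ j)%N by apply: ltn_expl.
by rewrite -(ltn_exp2l _ _ p1); apply: leq_ltn_trans h1 h2.
Qed.

Lemma logn_bin (p t i : nat) : prime p -> (i < p ^ t)%N ->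
  (t <= logn p 'C(p ^ t, i.+1) + i)%N.
Proof.
move=> pp ilt.
have P0 : (0 < p ^ t)%N by rewrite expn_gt0 prime_gt0.
have e := mul_bin_diag (p ^ t) i.
have c1 : (0 < 'C((p ^ t).-1, i))%N by rewrite bin_gt0 -ltnS (ltn_predK P0).
have c2 : (0 < 'C(p ^ t, i.+1))%N by rewrite bin_gt0.
have := congr1 (logn p) e.
rewrite !lognM // pfactorK //.
have := logn_small pp (ltn0Sn i).
move=> h1 h2; clear -h1 h2.
lia.
Qed.

Lemma binom_div (p t i : nat) (c : int) : prime p ->
  ((p ^ t.+1)%:Z %| c)%Z -> (i < p ^ t)%N ->
  (((p ^ t) ^ i.+1)%:Z %| ('C(p ^ t, i.+1))%:Z * c ^+ i)%Z.
Proof.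
move=> pp dc ilt.
rewrite /dvdz unfold_in /= abszM abszX !absz_nat.
move: dc; rewrite /dvdz unfold_in /= => /dvdnP [c' ->].
rewrite expnMn mulnCA dvdn_mull //.
have c2 : (0 < 'C(p ^ t, i.+1))%N by rewrite bin_gt0.
rewrite -expnM pfactor_dvdn // ?muln_gt0 ?c2 ?expn_gt0 ?prime_gt0 //.
rewrite lognM ?c2 ?expn_gt0 ?prime_gt0 // -expnM pfactorK //.
have := logn_bin pp ilt; clear; nia.
Qed.


Lemma dvdz_XX (d x y : int) (n : nat) : (d %| x - y)%Z -> (d %| x ^+ n - y ^+ n)%Z.
Proof. by move=> h; rewrite subrXX dvdz_mulr. Qed.

Lemma cong_mpow (d : int) (p : nat) (m : int) (i : nat) :
  (d %| m ^+ p - m)%Z -> (d %| m ^+ (p ^ i) - m)%Z.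
Proof.
move=> h; elim: i => [|i IH]; first by rewrite expn0 expr1 subrr dvdz0.
rewrite expnSr exprM.
have -> : (m ^+ (p ^ i)) ^+ p - m = ((m ^+ (p ^ i)) ^+ p - m ^+ p) + (m ^+ p - m).
  by rewrite addrA subrK.
by rewrite rpredD // dvdz_XX.
Qed.

Lemma c_div (m : int) (p k t : nat) : prime p ->
  (t.+1 <= vp p (m ^+ p - m))%N -> (t <= k)%N ->
  ((p ^ t.+1)%:Z %| m - ((m %% (p ^ k.+1)%:Z)%Z) ^+ (p ^ t))%Z.
Proof.
move=> pp hv tk.
set r := (m %% (p ^ k.+1)%:Z)%Z.
have h1 : ((p ^ t.+1)%:Z %| m ^+ p - m)%Z.
  move: hv; rewrite /vp /dvdz unfold_in /=.
  have [->|nz] := eqVneq `|m ^+ p - m|%N 0%N; first by rewrite logn0.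
  by rewrite pfactor_dvdn // lt0n.
have h2 := cong_mpow t h1.
have h3 : ((p ^ t.+1)%:Z %| m - r)%Z.
  have e : m - r = (m %/ (p ^ k.+1)%:Z)%Z * (p ^ k.+1)%:Z.
    by rewrite {1}(divz_eq m (p ^ k.+1)%:Z) addrK.
  rewrite e dvdz_mull // /dvdz unfold_in /= dvdn_exp2l //.
have h4 := dvdz_XX (p ^ t) h3.
have -> : m - r ^+ (p ^ t) = (m ^+ (p ^ t) - r ^+ (p ^ t)) - (m ^+ (p ^ t) - m).
  ring.
by rewrite rpredB.
Qed.


Lemma hpoly_eval (p k t : nat) (r : int) (alpha : algC) : prime p -> (t <= k)%N ->
  (map_poly intr (hpoly p k t r)).[alpha] =
  \sum_(i < p ^ t) (alpha ^+ (p ^ (k - t))) ^+ ((p ^ t).-1 - i) * r%:~R ^+ i.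
Proof.
move=> pp tk.
rewrite /hpoly raddf_sum horner_sum; apply: eq_bigr => i _ /=.
rewrite map_polyZ map_polyXn hornerZ hornerXn rmorphXn /= mulrC -exprM.
congr (_ * _); congr (_ ^+ _).
have e : (p ^ k = p ^ t * p ^ (k - t))%N by rewrite -expnD subnKC.
have hi := ltn_ord i.
move: e hi; move: (p ^ k)%N (p ^ t)%N (p ^ (k - t))%N (nat_of_ord i) => K A B j.
clear; nia.
Qed.

Lemma c_neq0 (m r : int) (P : nat) : squarefree_int m -> m != 1 -> m != -1 ->
  (1 < P)%N -> m - r ^+ P != 0.
Proof.
move=> [m0 sq] m1 mN1 P1; rewrite subr_eq0; apply/eqP => E.
have : (`|r| * `|r| %| `|m|)%N.
  rewrite E abszX mulnn dvdn_exp2l //.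
move/sq => r1.
have : `|m|%N = 1%N by rewrite E abszX r1 exp1n.
clear -m1 mN1; case: m m1 mN1 => [[|[|n]]|[|n]] //.
Qed.

Lemma hdiv_Aint (m : int) (p k t : nat) (alpha : algC) :
  squarefree_int m -> m != 1 -> m != -1 -> prime p ->
  alpha ^+ (p ^ k) = m%:~R -> (t <= k)%N ->
  (t = 0%N \/ (t.+1 <= vp p (m ^+ p - m))%N) ->
  (map_poly intr (hpoly p k t (m %% (p ^ k.+1)%:Z)%Z)).[alpha] / (p ^ t)%:R \in Aint.
Proof.
move=> sqm m1 mN1 pp an tk ht.
set r := (m %% (p ^ k.+1)%:Z)%Z.
rewrite hpoly_eval //.
have [t0|t0] := posnP t.
  subst t; rewrite expn0 big_ord1 subnn !expr0 mulr1 divr1; exact: rpred1.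
have hv : (t.+1 <= vp p (m ^+ p - m))%N.
  by case: ht => // ht0; rewrite ht0 in t0.
have P1 : (1 < p ^ t)%N by rewrite -{1}(expn0 p) ltn_exp2l ?prime_gt1.
apply: (@h_Aint r (m - r ^+ (p ^ t)) (p ^ t) (p ^ t)).
- by rewrite expn_gt0 prime_gt0.
- by rewrite expn_gt0 prime_gt0.
- clearbody r; rewrite -exprM -expnD subnK // an rmorphB /= rmorphXn /=.
  by rewrite addrC subrK.
- exact: c_neq0.
- move=> i ilt; apply: binom_div => //.
  exact: c_div.
Qed.


Definition Lx (p k : nat) (tj : nat * nat) : nat := (tj.2 + (p ^ k - p ^ (k - tj.1)))%N.
Definition Ex (p k : nat) (tj : nat * nat) (i : nat) : nat :=
  (tj.2 + (p ^ k - i.+1 * p ^ (k - tj.1)))%N.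

Lemma mem_idx (p k s : nat) tj : tj \in basis_index p k s ->
  ((tj.1 < s) && (tj.2 < p ^ (k - tj.1) - p ^ (k - tj.1 - 1)))%N \/
  (tj.1 = s /\ (tj.2 < p ^ (k - s))%N).
Proof.
rewrite /basis_index mem_cat => /orP [/allpairsPdep [t [j [ht hj ->]]] | /mapP [j hj ->]].
- by left; rewrite mem_iota in ht; rewrite mem_iota in hj; rewrite /=; move: ht hj; clear; lia.
- by right; rewrite mem_iota in hj; split => //=; move: hj; clear; lia.
Qed.

Lemma uniq_idx (p k s : nat) : uniq (basis_index p k s).
Proof.
rewrite /basis_index cat_uniq; apply/and3P; split.
- apply: allpairs_uniq_dep; first exact: iota_uniq.
  + move=> t _; exact: iota_uniq.
  + move=> [t1 j1] [t2 j2] _ _ /= [e1 e2]; subst; by [].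
- apply/hasPn => tj /mapP [j _ ->]; apply/negP => /allpairsPdep [t [j' [ht _ e]]].
  case: e => e _; subst; rewrite mem_iota in ht; move: ht; clear; lia.
- rewrite map_inj_uniq ?iota_uniq // => j1 j2 [] //.
Qed.

Section Facts.
Variables (p k s : nat).
Hypothesis pp : prime p.
Hypothesis sk : (s < k)%N.

Lemma pow_facts (t : nat) : (t <= s)%N ->
  [/\ (p ^ (k - t - 1) <= p ^ (k - t))%N, (p ^ (k - t) <= p ^ k)%N,
      (0 < p ^ (k - t - 1))%N & (p ^ k = p ^ t * p ^ (k - t))%N].
Proof.
move=> ts; have p0 : (0 < p)%N by apply: prime_gt0.
split.
- by rewrite leq_pexp2l //; lia.
- by rewrite leq_pexp2l //; lia.
- by rewrite expn_gt0 p0.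
- by rewrite -expnD subnKC //; lia.
Qed.

Lemma pow_mono (t1 t2 : nat) : (t1 < t2)%N -> (t2 <= s)%N -> (p ^ (k - t2) <= p ^ (k - t1 - 1))%N.
Proof. move=> h1 h2; rewrite leq_pexp2l ?prime_gt0 //; lia. Qed.

Lemma idx_t tj : tj \in basis_index p k s -> (tj.1 <= s)%N.
Proof. by case/mem_idx => [/andP [h _]|[-> _]] //; apply: ltnW. Qed.

Lemma L_bounds tj : tj \in basis_index p k s ->
  (p ^ k - p ^ (k - tj.1) <= Lx p k tj)%N /\
  (Lx p k tj < if (tj.1 < s)%N then p ^ k - p ^ (k - tj.1 - 1) else p ^ k)%N.
Proof.
move=> hin; have := idx_t hin; case: tj hin => t j hin /= ts.
have [f1 f2 f3 _] := pow_facts ts.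
rewrite /Lx /=; case/mem_idx: hin => /= [/andP [h1 h2] | [h1 h2]].
  by rewrite h1; move: f1 f2 f3 h2; clear; lia.
by subst; rewrite ltnn; move: f1 f2 f3 h2; clear; lia.
Qed.

Lemma L_lt tj : tj \in basis_index p k s -> (Lx p k tj < p ^ k)%N.
Proof.
move=> hin; have [_ h] := L_bounds hin; have := idx_t hin.
have [f1 f2 f3 _] := pow_facts (idx_t hin).
by case: ifP h => _ h; move: f1 f2 f3 h; clear; lia.
Qed.

Lemma L_inj tj1 tj2 : tj1 \in basis_index p k s -> tj2 \in basis_index p k s ->
  Lx p k tj1 = Lx p k tj2 -> tj1 = tj2.
Proof.
wlog: tj1 tj2 / (tj1.1 <= tj2.1)%N.
  move=> H h1 h2 e; case: (leqP tj1.1 tj2.1) => le; first exact: H.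
  by apply/esym; apply: H => //; apply: ltnW.
move=> le h1 h2 e.
have [l1 u1] := L_bounds h1; have [l2 u2] := L_bounds h2.
have t1s := idx_t h1; have t2s := idx_t h2.
have [f1 f2 f3 _] := pow_facts t1s; have [g1 g2 g3 _] := pow_facts t2s.
case: tj1 tj2 h1 h2 e le l1 u1 l2 u2 t1s t2s f1 f2 f3 g1 g2 g3 => [t1 j1] [t2 j2] h1 h2 e le l1 u1 l2 u2 t1s t2s f1 f2 f3 g1 g2 g3 /=.
simpl in *.
case: (ltngtP t1 t2) le => // [lt|eq] _.
  have m := pow_mono lt t2s.
  have t1s' : (t1 < s)%N by apply: leq_trans lt t2s.
  rewrite t1s' in u1; move: e l1 u1 l2 m f1 f2 g1 g2; clear; lia.
subst; congr (_, _); move: e; rewrite /Lx /=; clear; lia.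
Qed.

Lemma E_facts tj i : tj \in basis_index p k s -> (i < p ^ tj.1)%N ->
  (Ex p k tj i <= Lx p k tj)%N /\ ((0 < i)%N -> (Ex p k tj i < Lx p k tj)%N).
Proof.
move=> hin hi; have [f1 f2 f3 f4] := pow_facts (idx_t hin).
rewrite /Ex /Lx; move: f1 f2 f3 f4 hi.
move: (p ^ k)%N (p ^ tj.1)%N (p ^ (k - tj.1))%N (p ^ (k - tj.1 - 1))%N tj.2 => K A B C j.
clear; split; nia.
Qed.

Lemma E0 tj : Ex p k tj 0 = Lx p k tj.
Proof. by rewrite /Ex /Lx mul1n. Qed.

End Facts.


Definition Qpoly (p k : nat) (r : int) (c : nat * nat -> rat) (idx : seq (nat * nat)) : {poly rat} :=
  \sum_(tj <- idx) (c tj / (p ^ tj.1)%:R) *: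
     \sum_(i < p ^ tj.1) ((r ^+ i)%:~R : rat) *: 'X^(Ex p k tj i).

Lemma Q_coef p k r c idx e : (Qpoly p k r c idx)`_e =
  \sum_(tj <- idx) c tj / (p ^ tj.1)%:R *
     \sum_(i < p ^ tj.1) (r ^+ i)%:~R * (e == Ex p k tj i)%:R.
Proof.
rewrite /Qpoly coef_sum; apply: eq_bigr => tj _.
rewrite coefZ coef_sum; congr (_ * _); apply: eq_bigr => i _.
by rewrite coefZ coefXn.
Qed.

Lemma Q_eval p k r c idx (alpha : algC) :
  (map_poly ratr (Qpoly p k r c idx)).[alpha] =
  \sum_(tj <- idx) ratr (c tj) * basis_elt p k r alpha tj.
Proof.

rewrite /Qpoly raddf_sum horner_sum big_seq [RHS]big_seq; apply: eq_bigr => tj tjin /=.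
rewrite map_polyZ hornerZ raddf_sum horner_sum /basis_elt /hpoly.
rewrite raddf_sum horner_sum /= fmorph_div /= ratr_nat.
rewrite mulrA mulrAC; congr (_ / _); congr (_ * _).
rewrite mulr_sumr; apply: eq_bigr => i _.
rewrite map_polyZ map_polyXn hornerZ hornerXn map_polyZ map_polyXn hornerZ hornerXn.
by rewrite /= ratr_int /Ex exprD mulrCA.
Qed.


Lemma indep (m : int) (p k s : nat) (r : int) (alpha : algC) :
  squarefree_int m -> m != 1 -> m != -1 -> prime p -> (0 < k)%N ->
  alpha ^+ (p ^ k) = m%:~R -> (s < k)%N ->
  Q_lin_indep (basis_index p k s) (basis_elt p k r alpha).
Proof.
move=> sqm m1 mN1 pp k0 an sk.
split; first exact: uniq_idx.
move=> c H.
set idx := basis_index p k s.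
set Q := Qpoly p k r c idx.
have n0 : (0 < p ^ k)%N by rewrite expn_gt0 prime_gt0.
have Q0 : Q = 0.
  apply: (powers_indep_rat sqm m1 mN1 n0 an); last by rewrite Q_eval.
  apply/leq_sizeP => e he; rewrite Q_coef big_seq big1 // => tj tjin.
  rewrite big1 ?mulr0 // => i _.
  have [le _] := E_facts pp sk tjin (ltn_ord i).
  have lt := L_lt pp sk tjin.
  rewrite (_ : (_ == _) = false) ?mulr0 //; apply: gtn_eqF.
  by apply: leq_ltn_trans le (leq_trans lt he).
have cf e : Q`_e = 0 by rewrite Q0 coef0.
have main : forall N tj, tj \in idx -> (p ^ k - Lx p k tj <= N)%N -> c tj = 0.
  elim => [|N IH] tj tjin hN.
    have := L_lt pp sk tjin; move: hN; clear; lia.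
  have := cf (Lx p k tj); rewrite Q_coef (bigD1_seq tj) //=; last exact: uniq_idx.
  rewrite [X in _ + X](_ : _ = 0) ?addr0; last first.
    rewrite big_seq_cond; apply: big1 => tj' /andP [tj'in ne].
    case: (ltngtP (Lx p k tj') (Lx p k tj)) => [lt|gt|eq].
    - rewrite big1 ?mulr0 // => i _; have [le _] := E_facts pp sk tj'in (ltn_ord i).
      rewrite (_ : (_ == _) = false) ?mulr0 //; apply: gtn_eqF; exact: leq_ltn_trans le lt.
    - rewrite (IH tj' tj'in) ?mul0r //.
      have := L_lt pp sk tj'in; move: hN gt; clear; lia.
    - by have := L_inj pp sk tj'in tjin eq; move/eqP: ne.
  have P0 : (0 < p ^ tj.1)%N by rewrite expn_gt0 prime_gt0.
  rewrite (bigD1 (Ordinal P0)) //= expr0 E0 eqxx mulr1 big1 ?addr0; last first.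
    move=> i ne; have [_ lt] := E_facts pp sk tjin (ltn_ord i).
    have i0 : (0 < i)%N by rewrite lt0n; apply: contra ne => /eqP h; apply/eqP/val_inj.
    by rewrite (_ : (_ == _) = false) ?mulr0 //; apply: gtn_eqF; apply: lt.
  have D0 : ((p ^ tj.1)%:R : rat) != 0 by rewrite pnatr_eq0 -lt0n P0.
  by rewrite mulr1 => /eqP; rewrite mulf_eq0 invr_eq0 (negbTE D0) orbF => /eqP.
move=> tj tjin; apply: (main (p ^ k)%N) => //; exact: leq_subr.
Qed.

Theorem corollary3p2 (m : int) (p k : nat) (alpha : algC) :
  squarefree_int m -> m != 1 -> m != -1 ->
  prime p -> (0 < k)%N ->
  alpha ^+ (p ^ k) = m%:~R ->
  let r := (m %% (p ^ k.+1)%:Z)%Z in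
  let s := (vp p (m ^+ p - m) - 1)%N in
  (s < k)%N ->
  (forall tj, tj \in basis_index p k s -> basis_elt p k r alpha tj \in Aint) /\
  Q_lin_indep (basis_index p k s) (basis_elt p k r alpha).
Proof.
move=> sqm m1 mN1 pp k0 an r s sk.
split; last exact: (indep _ sqm m1 mN1 pp k0 an sk).
move=> tj tjin.
have n0 : (0 < p ^ k)%N by rewrite expn_gt0 prime_gt0.
have aA := alpha_Aint n0 an.
rewrite /basis_elt -mulrA rpredM ?rpredX //.
have ts := idx_t tjin.
apply: hdiv_Aint => //.
  by apply: leq_trans ts (ltnW sk).
have [t0|t0] := posnP tj.1; first by left.
right; move: ts t0; rewrite /s; move: (vp p (m ^+ p - m)) (tj.1) => v t; clear; lia.
Qed.
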